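(* Let $n\ge2$ be an integer and $\lambda>0$, and let $\gamma(t)=(\omega(t),x(t),y(t))$, $t\in(S,T)$ the maximal interval of existence, be a solution with $\omega>0$ of the system $$\frac{d\omega}{dt}=x\omega,\qquad \frac{dx}{dt}=x^2-xy+n-1-\lambda\omega^2,\qquad \frac{dy}{dt}=xy-nx^2-\lambda\omega^2.$$ Then the quantity $Q=y/\omega$ is strictly decreasing along $\gamma$. If moreover $\int_{t_0}^T\omega(\sigma)\,d\sigma=\infty$ for some (equivalently every) $t_0\in(S,T)$, then $\lim_{t\to T}Q(t)=-\infty$; in particular $y(t)<0$ for all $t$ sufficiently close to $T$. *)

(* Defs.v *)
From Stdlib Require Import Reals.
From Coquelicot Require Import Coquelicot.
Open Scope R_scope.

Definition in_ivl (S T : Rbar) (t : R) : Prop := Rbar_lt S t /\ Rbar_lt t T.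

Definition is_solution (n : nat) (lam : R) (S T : Rbar)
    (omega x y : R -> R) : Prop :=
  forall t, in_ivl S T t ->
    is_derive omega t (x t * omega t) /\
    is_derive x t (x t ^ 2 - x t * y t + INR n - 1 - lam * omega t ^ 2) /\
    is_derive y t (x t * y t - INR n * x t ^ 2 - lam * omega t ^ 2).

Definition is_maximal_solution (n : nat) (lam : R) (S T : Rbar)
    (omega x y : R -> R) : Prop :=
  is_solution n lam S T omega x y /\
  forall (S' T' : Rbar) (omega' x' y' : R -> R),
    Rbar_le S' S -> Rbar_le T T' ->
    is_solution n lam S' T' omega' x' y' ->
    (forall t, in_ivl S T t -> omega' t = omega t /\ x' t = x t /\ y' t = y t) ->
    S' = S /\ T' = T.

(* int_{t0}^T omega = +infinity, stated via the partial integrals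
   (which are increasing since omega > 0): they are unbounded as t -> T. *)
Definition integral_diverges_at_T (omega : R -> R) (t0 : R) (T : Rbar) : Prop :=
  forall M : R, exists t, t0 < t /\ Rbar_lt t T /\ M < RInt omega t0 t.

(* Main.v *)
Require Import Defs.
From Stdlib Require Import Reals Lra Psatz.
From Coquelicot Require Import Coquelicot.
Open Scope R_scope.

Lemma ivl_mid (S T : Rbar) a b s :
  in_ivl S T a -> in_ivl S T b -> a <= s <= b -> in_ivl S T s.
Proof.
  unfold in_ivl; destruct S, T; simpl; intros; lra.
Qed.

Lemma cont_of_deriv f s l : is_derive f s l -> continuity_pt f s.
Proof.
  intro H. apply derivable_continuous_pt. exists l.
  apply is_derive_Reals; exact H.
Qed.

Theorem lemma3p5 (n : nat) (lam : R) (S T : Rbar) (omega x y : R -> R)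
  (hn : (2 <= n)%nat) (hlam : 0 < lam)
  (hsol : is_maximal_solution n lam S T omega x y)
  (hpos : forall t, in_ivl S T t -> 0 < omega t) :
  (forall s t, in_ivl S T s -> in_ivl S T t -> s < t ->
     y t / omega t < y s / omega s) /\
  ((exists t0, in_ivl S T t0 /\ integral_diverges_at_T omega t0 T) ->
     (forall M : R, exists t1, in_ivl S T t1 /\
        forall t, t1 < t -> Rbar_lt t T -> y t / omega t < M) /\
     (exists t1, in_ivl S T t1 /\
        forall t, t1 < t -> Rbar_lt t T -> y t < 0)).
Proof.
  destruct hsol as [hs _].
  set (D := fun s => -(INR n * x s ^ 2) / omega s - lam * omega s).
  assert (hnn : 0 <= INR n) by apply pos_INR.
  assert (hQ : forall s, in_ivl S T s -> is_derive (fun t => y t / omega t) s (D s)).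
  { intros s Hs. destruct (hs s Hs) as [h1 [h2 h3]].
    assert (hw := hpos s Hs).
    replace (D s) with
      (((x s * y s - INR n * x s ^ 2 - lam * omega s ^ 2) * omega s - y s * (x s * omega s)) / omega s ^ 2).
    - apply is_derive_div; auto; lra.
    - unfold D; field; lra. }
  assert (hDle : forall s, in_ivl S T s -> D s <= - lam * omega s).
  { intros s Hs. assert (hw := hpos s Hs). unfold D.
    assert (0 <= INR n * x s ^ 2 / omega s).
    { apply Rdiv_le_0_compat; [apply Rmult_le_pos; [lra| apply pow2_ge_0]|lra]. }
    unfold Rdiv in *. lra. }
  assert (hDlt : forall s, in_ivl S T s -> D s < 0).
  { intros s Hs. assert (hw := hpos s Hs). specialize (hDle s Hs).
    assert (0 < lam * omega s) by (apply Rmult_lt_0_compat; lra). lra. }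
  assert (hcD : forall s, in_ivl S T s -> continuous D s).
  { intros s Hs. apply continuity_pt_filterlim.
    destruct (hs s Hs) as [h1 [h2 h3]]. assert (hw := hpos s Hs).
    unfold D. apply continuity_pt_minus.
    - apply continuity_pt_div.
      + apply continuity_pt_opp. apply continuity_pt_mult.
        * apply continuity_pt_const. intros a b; reflexivity.
        * exact (cont_of_deriv _ _ _ (is_derive_pow x 2 s _ h2)).
      + exact (cont_of_deriv _ _ _ h1).
      + lra.
    - apply continuity_pt_mult.
      + apply continuity_pt_const. intros a b; reflexivity.
      + exact (cont_of_deriv _ _ _ h1). }
  assert (part1 : forall s t, in_ivl S T s -> in_ivl S T t -> s < t ->
     y t / omega t < y s / omega s).
  { intros s t Hs Ht Hst.
    destruct (MVT_gen (fun t => y t / omega t) s t D) as [c [Hc E]].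
    - intros z Hz. apply hQ. rewrite Rmin_left, Rmax_right in Hz by lra.
      apply (ivl_mid S T s t); auto; lra.
    - intros z Hz. rewrite Rmin_left, Rmax_right in Hz by lra.
      apply (cont_of_deriv _ _ (D z)). apply hQ. apply (ivl_mid S T s t); auto; lra.
    - rewrite Rmin_left, Rmax_right in Hc by lra.
      assert (Hci : in_ivl S T c) by (apply (ivl_mid S T s t); auto; lra).
      specialize (hDlt c Hci).
      assert (D c * (t - s) < 0).
      { nra. }
      simpl in E. lra. }
  split; [exact part1|].
  intros [t0 [Ht0 Hdiv]].
  assert (bound : forall t, t0 < t -> Rbar_lt t T ->
            y t / omega t - y t0 / omega t0 <= - lam * RInt omega t0 t).
  { intros t Hlt HT.
    assert (Ht : in_ivl S T t).
    { split; [|exact HT]. destruct Ht0 as [h _]. destruct S; simpl in *; auto; lra. }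
    assert (Hin : forall z, Rmin t0 t <= z <= Rmax t0 t -> in_ivl S T z).
    { intros z Hz. rewrite Rmin_left, Rmax_right in Hz by lra.
      apply (ivl_mid S T t0 t); auto. }
    assert (HI := is_RInt_derive (fun t => y t / omega t) D t0 t
                   (fun z Hz => hQ z (Hin z Hz)) (fun z Hz => hcD z (Hin z Hz))).
    apply is_RInt_unique in HI.
    assert (Hexw : ex_RInt omega t0 t).
    { apply (ex_RInt_continuous (V:=R_CompleteNormedModule)). intros z Hz.
      destruct (hs z (Hin z Hz)) as [h1 _]. apply (proj1 (continuity_pt_filterlim omega z)).
      exact (cont_of_deriv _ _ _ h1). }
    assert (Hle : RInt D t0 t <= RInt (fun z => -lam * omega z) t0 t).
    { apply RInt_le.
      - lra.
      - exists (minus (y t / omega t) (y t0 / omega t0)).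
        apply (is_RInt_derive (fun t => y t / omega t) D t0 t
                   (fun z Hz => hQ z (Hin z Hz)) (fun z Hz => hcD z (Hin z Hz))).
      - exists (-lam * RInt omega t0 t).
        apply (is_RInt_scal omega t0 t (-lam) (RInt omega t0 t)). apply (RInt_correct (V:=R_CompleteNormedModule)); exact Hexw.
      - intros z Hz. apply hDle. apply (ivl_mid S T t0 t); auto; lra. }
    assert (E: RInt (fun z => -lam*omega z) t0 t = -lam * RInt omega t0 t).
    { apply is_RInt_unique. apply (is_RInt_scal omega t0 t (-lam) (RInt omega t0 t)). apply (RInt_correct (V:=R_CompleteNormedModule)); exact Hexw. }
    rewrite E in Hle.
    rewrite HI in Hle. unfold minus, plus, opp, scal in Hle; simpl in Hle.
    unfold mult in Hle; simpl in Hle. lra. }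
  assert (part2 : forall M : R, exists t1, in_ivl S T t1 /\
        forall t, t1 < t -> Rbar_lt t T -> y t / omega t < M).
  { intro M.
    destruct (Hdiv ((y t0 / omega t0 - M) / lam)) as [t2 [H1 [H2 H3]]].
    assert (Ht2 : in_ivl S T t2).
    { split; [|exact H2]. destruct Ht0 as [h _]. destruct S; simpl in *; auto; lra. }
    exists t2. split; [exact Ht2|].
    intros t Hlt HT.
    assert (Ht : in_ivl S T t).
    { split; [|exact HT]. destruct Ht2 as [h _]. destruct S; simpl in *; auto; lra. }
    specialize (part1 t2 t Ht2 Ht Hlt).
    specialize (bound t2 H1 H2).
    assert (lam * ((y t0 / omega t0 - M) / lam) < lam * RInt omega t0 t2)
      by (apply Rmult_lt_compat_l; lra).
    set (a := y t0 / omega t0) in *.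
    replace (lam * ((a - M) / lam)) with (a - M) in H
      by (field; lra).
    lra. }
  split; [exact part2|].
  destruct (part2 0) as [t1 [Ht1 H]].
  exists t1. split; [exact Ht1|].
  intros t Hlt HT. specialize (H t Hlt HT).
  assert (Ht : in_ivl S T t).
  { split; [|exact HT]. destruct Ht1 as [h _]. destruct S; simpl in *; auto; lra. }
  assert (hw := hpos t Ht).
  replace (y t) with ((y t / omega t) * omega t) by (field; lra).
  assert (0 < - (y t / omega t) * omega t) by (apply Rmult_lt_0_compat; lra).
  lra.
Qed.
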